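(* Consider the sequences generated by Algorithm 2 (described in the context) and let $B=\{k\ge1:\lambda_k\|y_k-x_{k-1}\|<\eta\}$. Then for all $k\in B$, $$\nu_k\in N_C(y_k)\quad\text{and}\quad\|F(y_k)+\nu_k\|\le\frac{2\hat\theta/L+\eta}{\lambda_k^2}.$$
   Context: Setting: $\mathcal H$ real Hilbert space; $C\subseteq\mathcal H$ nonempty closed convex; $N_C(x)=\{\nu:\langle\nu,y-x\rangle\le0\ \forall y\in C\}$ if $x\in C$, $N_C(x)=\emptyset$ otherwise. $F:C\to\mathcal H$ is monotone, continuously differentiable, and $\|F'(x)-F'(y)\|\le L\|x-y\|$ for all $x,y\in C$, with $L>0$; the set of $x$ with $0\in F(x)+N_C(x)$ is nonempty. For $y\in C$, $F_y(x):=F(y)+F'(y)(x-y)$. Parameters: $0\le\hat\sigma<1/2$; $0<\theta<(1-\hat\sigma)(1-2\hat\sigma)$; $\hat\theta:=\theta\big(\frac{\hat\sigma}{1-\hat\sigma}+\frac{\theta}{(1-\hat\sigma)^2}\big)$; $\eta>2\hat\theta/L$; $\tau:=\dfrac{2(\theta-\hat\theta)}{2\theta+\frac{\eta L}{2}+\sqrt{(2\theta+\frac{\eta L}{2})^2-4\theta(\theta-\hat\theta)}}$. Algorithm 2: input $x_0\in C$, $y_0:=x_0$, $\nu_0:=0$, $\lambda_1>0$ with $\lambda_1^2\|F(y_0)\|\le2\theta/L$. For $k=1,2,\dots$: if $F(y_{k-1})+\nu_{k-1}=0$, stop and return $y_{k-1}$. If $\frac{\lambda_kL}{2}\|\lambda_k(F(y_{k-1})+\nu_{k-1})+y_{k-1}-x_{k-1}\|\le\hat\theta$,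 set $y_k=y_{k-1}$, $\nu_k=\nu_{k-1}$; otherwise find any $(y_k,\nu_k)$ with $\nu_k\in N_C(y_k)$ and $\|\lambda_k(F_{y_{k-1}}(y_k)+\nu_k)+y_k-x_{k-1}\|\le\hat\sigma\|y_k-y_{k-1}\|$. Then, if $\lambda_k\|y_k-x_{k-1}\|\ge\eta$, set $x_k=x_{k-1}-\tau\lambda_k(F(y_k)+\nu_k)$ and $\lambda_{k+1}=(1-\tau)\lambda_k$; else set $x_k=x_{k-1}$ and $\lambda_{k+1}=\lambda_k/(1-\tau)$. Standing assumption: the algorithm never stops at the first test, i.e. $F(y_{k-1})+\nu_{k-1}\neq0$ for all $k$. *)

(* Defs.v *)
From HB Require Import structures.
From mathcomp Require Import all_boot all_order all_algebra.
From mathcomp Require Import all_classical all_reals all_analysis.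
Set Implicit Arguments. Unset Strict Implicit. Unset Printing Implicit Defensive.
Import Order.TTheory GRing.Theory Num.Theory.
Import numFieldNormedType.Exports.
Local Open Scope classical_set_scope.
Local Open Scope ring_scope.

Section Defs.
Variables (R : realType) (V : normedModType R).

(* ip is a real inner product on V inducing the norm of V.  Together with
   completeness of V (completeNormedModType) this makes V a real Hilbert space. *)
Definition is_inner_product (ip : V -> V -> R) : Prop :=
  (forall x y, ip x y = ip y x) /\
  (forall a x y z, ip (a *: x + y) z = a * ip x z + ip y z) /\
  (forall x, ip x x = `|x| ^+ 2).

Definition is_convex_set (C : set V) : Prop :=
  forall x y (t : R), C x -> C y -> 0 <= t <= 1 -> C (t *: x + (1 - t) *: y).

Definition normal_cone (ip : V -> V -> R) (C : set V) (x nu : V) : Prop :=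
  C x /\ forall y, C y -> ip nu (y - x) <= 0.

Definition monotone_on (ip : V -> V -> R) (C : set V) (F : V -> V) : Prop :=
  forall x y, C x -> C y -> 0 <= ip (F x - F y) (x - y).

Definition bounded_linear_on (C : set V) (DF : V -> V -> V) : Prop :=
  forall y, C y ->
    (forall a u v, DF y (a *: u + v) = a *: DF y u + DF y v) /\
    (exists M : R, forall v, `|DF y v| <= M * `|v|).

Definition frechet_deriv_on (C : set V) (F : V -> V) (DF : V -> V -> V) : Prop :=
  forall y, C y -> forall eps : R, 0 < eps -> exists2 delta : R, 0 < delta &
    forall z, C z -> `|z - y| < delta ->
      `|F z - F y - DF y (z - y)| <= eps * `|z - y|.

Definition lipschitz_deriv_on (C : set V) (DF : V -> V -> V) (L : R) : Prop :=
  forall x y, C x -> C y -> forall v, `|DF x v - DF y v| <= L * `|x - y| * `|v|.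

Definition Flin (F : V -> V) (DF : V -> V -> V) (y x : V) : V := F y + DF y (x - y).

Definition theta_hat (sigma theta : R) : R :=
  theta * (sigma / (1 - sigma) + theta / (1 - sigma) ^+ 2).

Definition tau_of (sigma theta eta L : R) : R :=
  let th := theta_hat sigma theta in
  let a := 2 * theta + eta * L / 2 in
  2 * (theta - th) / (a + Num.sqrt (a ^+ 2 - 4 * theta * (theta - th))).

(* (x, y, nu, lam) is a run of Algorithm 2 that never stops.
   x, y, nu are indexed from 0, lam from 1 (lam 0 is unused). *)
Definition algorithm2 (ip : V -> V -> R) (C : set V) (F : V -> V) (DF : V -> V -> V)
  (L sigma theta eta : R) (x y nu : nat -> V) (lam : nat -> R) : Prop :=
  let th := theta_hat sigma theta in
  let tau := tau_of sigma theta eta L in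
  C (x 0%N) /\ y 0%N = x 0%N /\ nu 0%N = 0 /\
      0 < lam 1%N /\ lam 1%N ^+ 2 * `|F (y 0%N)| <= 2 * theta / L /\
      (* standing assumption: never stops at the first test *)
      (forall k, F (y k) + nu k != 0) /\
      forall k : nat,
        (if lam k.+1 * L / 2 * `|lam k.+1 *: (F (y k) + nu k) + y k - x k| <= th
         then y k.+1 = y k /\ nu k.+1 = nu k
         else normal_cone ip C (y k.+1) (nu k.+1) /\
              `|lam k.+1 *: (Flin F DF (y k) (y k.+1) + nu k.+1) + y k.+1 - x k|
                 <= sigma * `|y k.+1 - y k|) /\
        (if eta <= lam k.+1 * `|y k.+1 - x k|
         then x k.+1 = x k - (tau * lam k.+1) *: (F (y k.+1) + nu k.+1) /\
              lam k.+2 = (1 - tau) * lam k.+1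
         else x k.+1 = x k /\ lam k.+2 = lam k.+1 / (1 - tau)).

End Defs.

(* Main.v *)
Require Import Defs.
From HB Require Import structures.
From mathcomp Require Import all_boot all_order all_algebra.
From mathcomp Require Import all_classical all_reals all_analysis.
From mathcomp Require Import ring lra.
Import Order.TTheory GRing.Theory Num.Theory.
Import numFieldNormedType.Exports.
Local Open Scope classical_set_scope.
Local Open Scope ring_scope.
Set Implicit Arguments. Unset Strict Implicit. Unset Printing Implicit Defensive.

Section IP.
Variables (R : realType) (V : normedModType R) (ip : V -> V -> R).
Hypothesis hip : is_inner_product ip.

Lemma ipC x y : ip x y = ip y x.
Proof. by case: hip. Qed.
Lemma ipxx x : ip x x = `|x| ^+ 2.
Proof. by case: hip => _ []. Qed.
Lemma ip_lin a x y z : ip (a *: x + y) z = a * ip x z + ip y z.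
Proof. by case: hip => _ []. Qed.
Lemma ip0l z : ip 0 z = 0.
Proof.
have := ip_lin 1 0 0 z; rewrite scaler0 addr0 mul1r => h.
by apply/eqP; rewrite -(subrr (ip 0 z)) {2}h addrK.
Qed.
Lemma ipDl x y z : ip (x + y) z = ip x z + ip y z.
Proof. by rewrite -{1}[x]scale1r ip_lin mul1r. Qed.
Lemma ipZl a x z : ip (a *: x) z = a * ip x z.
Proof. by rewrite -[a *: x]addr0 ip_lin ip0l addr0. Qed.
Lemma ipNl x z : ip (- x) z = - ip x z.
Proof. by rewrite -scaleN1r ipZl mulN1r. Qed.
Lemma ipBl x y z : ip (x - y) z = ip x z - ip y z.
Proof. by rewrite ipDl ipNl. Qed.
Lemma ip0r z : ip z 0 = 0.
Proof. by rewrite ipC ip0l. Qed.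
Lemma ipDr x y z : ip z (x + y) = ip z x + ip z y.
Proof. by rewrite ipC ipDl !(ipC z). Qed.
Lemma ipZr a x z : ip z (a *: x) = a * ip z x.
Proof. by rewrite ipC ipZl ipC. Qed.
Lemma ipNr x z : ip z (- x) = - ip z x.
Proof. by rewrite ipC ipNl ipC. Qed.
Lemma ipBr x y z : ip z (x - y) = ip z x - ip z y.
Proof. by rewrite ipDr ipNr. Qed.

Lemma ip_CS u v : ip u v <= `|u| * `|v|.
Proof.
have [->|u0] := eqVneq u 0; first by rewrite ip0l normr0 mul0r.
have [->|v0] := eqVneq v 0; first by rewrite ip0r normr0 mulr0.
have nu : 0 < `|u| by rewrite normr_gt0.
have nv : 0 < `|v| by rewrite normr_gt0.
set t := `|v| / `|u|.
have tp : 0 < t by rewrite divr_gt0.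
have htu : t * `|u| = `|v| by rewrite /t mulfVK // gt_eqF.
have := ipxx (t *: u - v).
rewrite ipBl !ipBr !ipZl !ipZr !ipxx (ipC v u) => h.
have h0 : 0 <= `|t *: u - v| ^+ 2 by rewrite exprn_ge0.
rewrite -h in h0.
have : t * ip u v <= t * (`|u| * `|v|).
  rewrite -htu. nra.
by rewrite ler_pM2l.
Qed.

Lemma ip_CS' u v : - (`|u| * `|v|) <= ip u v.
Proof. by rewrite lerNl -ipNl -(normrN u); apply: ip_CS. Qed.

End IP.
Section Incr.
Variable R : realType.
Lemma incr_lemma (psi : R -> R) :
  (forall t : R, 0 <= t <= 1 -> forall e : R, 0 < e -> exists2 d : R, 0 < d &
     forall u : R, 0 <= u <= 1 -> `|u - t| < d ->
       (u - t) * (psi u - psi t) <= e * (u - t) ^+ 2) ->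
  psi 1 <= psi 0.
Proof.
move=> hyp; apply/ler_addgt0Pr => e he.
pose A := [set s : R | 0 <= s <= 1 /\ forall u, 0 <= u <= s -> psi u <= psi 0 + e * u].
have A0 : A 0.
  split; first by rewrite lexx ler01.
  move=> u /andP[u0 u1]; have -> : u = 0 by apply/eqP; rewrite eq_le u0 u1.
  by rewrite mulr0 addr0.
have ub1 : ubound A 1 by move=> s [/andP[_ ?] _].
have hs : has_sup A by split; [exists 0 | exists 1].
set m := sup A.
have m1 : m <= 1 by apply: ge_sup => //; exists 0.
have m0 : 0 <= m by apply: sup_upper_bound.
have Plt : forall u, 0 <= u -> u < m -> psi u <= psi 0 + e * u.
  move=> u u0 um.
  have mu0 : 0 < m - u by rewrite subr_gt0.
  have [s [_ Ps] hs'] := sup_adherent mu0 hs.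
  apply: Ps; rewrite u0 /=; rewrite /m in hs'; lra.
have Pm : forall u, 0 <= u <= m -> psi u <= psi 0 + e * u.
  move=> u /andP[u0 um].
  have [ult|] := ltP u m; first exact: Plt.
  move=> mu; have {um mu} -> : u = m by apply/eqP; rewrite eq_le um mu.
  have [->|mpos] := eqVneq m 0; first by rewrite mulr0 addr0.
  have mp : 0 < m by rewrite lt_def mpos m0.
  have [d dp hd] := hyp m (introT andP (conj m0 m1)) e he.
  have [u' [u'0 u'm u'd]] : exists u', [/\ 0 <= u', u' < m & m - u' < d].
    have [h|h] := leP (m - d / 2) 0.
      by exists 0; split; lra.
    by exists (m - d / 2); split; lra.
  have := hd u'; rewrite u'0 /= => /(_ (le_trans (ltW u'm) m1)).
  rewrite ltr0_norm; last lra.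
  move=> /(_ ltac:(lra)) h1.
  have h2 := Plt u' u'0 u'm.
  have h3 : psi m - psi u' <= e * (m - u').
    have hpos : 0 < m - u' by lra.
    rewrite -(ler_pM2l hpos); nra.
  lra.
have m_eq1 : m = 1.
  apply/eqP; rewrite eq_le m1 /=; apply/negP => /negP; rewrite -ltNge => mlt.
  have [d dp hd] := hyp m (introT andP (conj m0 m1)) e he.
  have [m' [m'1 mm' m'd]] : exists m', [/\ m' <= 1, m < m' & m' - m < d].
    have [h|h] := leP (m + d / 2) 1.
      by exists (m + d / 2); split; lra.
    by exists 1; split; lra.
  have Am' : A m'.
    split; first by apply/andP; split; lra.
    move=> u /andP[u0 um'].
    have [um|mu] := ltP m u; last by apply: Pm; rewrite u0.
    have := hd u; rewrite u0 (le_trans um' m'1) /= ger0_norm; last lra.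
    move=> /(_ ltac:(lra)) h1.
    have hm := Pm m (introT andP (conj m0 (lexx m))).
    have h3 : psi u - psi m <= e * (u - m).
      have hpos : 0 < u - m by lra.
      rewrite -(ler_pM2l hpos); nra.
    lra.
  have := sup_upper_bound hs Am'; rewrite -/m; lra.
have := Pm 1; rewrite m_eq1 ler01 lexx mulr1; exact.
Qed.
End Incr.

Lemma exists_min (R : realType) (a b : R) : 0 < a -> 0 < b ->
  exists del, [/\ 0 < del, del <= a & del <= b].
Proof.
move=> a0 b0; have [h|h] := leP a b; first by exists a; split => //.
by exists b; split => //; apply: ltW.
Qed.

Section Main.
Variables (R : realType) (H : normedModType R) (ip : H -> H -> R) (C : set H)
  (F : H -> H) (DF : H -> H -> H) (L : R).
Hypotheses (hip : is_inner_product ip) (hconv : is_convex_set C)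
  (hmon : monotone_on ip C F) (hbl : bounded_linear_on C DF)
  (hfr : frechet_deriv_on C F DF) (hL : 0 < L) (hlip : lipschitz_deriv_on C DF L).

Lemma DF0 y : C y -> DF y 0 = 0.
Proof.
move=> Cy; have [lin _] := hbl Cy.
have := lin 1 0 0; rewrite scaler0 addr0 scale1r => h.
by apply: (addrI (DF y 0)); rewrite addr0 -h.
Qed.
Lemma DFZ y a u : C y -> DF y (a *: u) = a *: DF y u.
Proof.
move=> Cy; have [lin _] := hbl Cy.
by rewrite -[a *: u]addr0 lin DF0 // addr0.
Qed.
Lemma DFD y u v : C y -> DF y (u + v) = DF y u + DF y v.
Proof.
move=> Cy; have [lin _] := hbl Cy.
by rewrite -{1}[u]scale1r lin scale1r.
Qed.
Lemma DFB y u v : C y -> DF y (u - v) = DF y u - DF y v.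
Proof. by move=> Cy; rewrite DFD // -scaleN1r DFZ // scaleN1r. Qed.

Lemma segC y z t : C y -> C z -> 0 <= t <= 1 -> C (y + t *: (z - y)).
Proof.
move=> Cy Cz ht; have := hconv Cz Cy ht.
by rewrite scalerBl scale1r scalerBr addrCA.
Qed.

Lemma seg_sub (y d : H) (t : R) : (y + t *: d) - y = t *: d.
Proof. by rewrite addrC addKr. Qed.

Lemma seg_sub2 (y d : H) (u t : R) : (y + u *: d) - (y + t *: d) = (u - t) *: d.
Proof. by rewrite opprD addrACA subrr add0r scalerBl. Qed.

Lemma DF_mono y z : C y -> C z -> 0 <= ip (DF y (z - y)) (z - y).
Proof.
move=> Cy Cz; set d := z - y.
have [d0|dn0] := eqVneq d 0; first by rewrite d0 DF0 // ip0l.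
have nd : 0 < `|d| by rewrite normr_gt0.
apply/ler_addgt0Pr => e he.
have kp : 0 < e / `|d| ^+ 2 by rewrite divr_gt0 // exprn_gt0.
have [del dp hdel] := hfr Cy kp.
have [t [t0 t1 tn]] : exists t, [/\ 0 < t, t <= 1 & t * `|d| < del].
  have [h|h] := leP (del / (2 * `|d|)) 1.
    exists (del / (2 * `|d|)); split => //.
      by rewrite divr_gt0 // mulr_gt0.
    have -> : del / (2 * `|d|) * `|d| = del / 2 by field; rewrite gt_eqF.
    lra.
  exists 1; split => //; rewrite mul1r.
  move: h; rewrite ltr_pdivlMr ?mulr_gt0 //; lra.
have t01 : 0 <= t <= 1 by rewrite (ltW t0) t1.
have Cp := segC Cy Cz t01; rewrite -/d in Cp.
set p := y + t *: d in Cp.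
have hpy : p - y = t *: d by rewrite seg_sub.
have npy : `|p - y| = t * `|d| by rewrite hpy normrZ gtr0_norm.
have := hdel p Cp; rewrite npy => /(_ tn).
rewrite hpy DFZ //; set err := F p - F y - t *: DF y d => herr.
have hmo := hmon Cp Cy; rewrite hpy in hmo.
move: hmo; have -> : F p - F y = t *: DF y d + err by rewrite /err [t *: _ + _]addrC subrK.
rewrite (ipDl hip) !(ipZl hip) !(ipZr hip).
set X := ip (DF y d) d; set Q := ip err d => h1.
have h2 : Q <= `|err| * `|d| by apply: (ip_CS hip).
have h3 := ler_wpM2r (normr_ge0 d) herr.
have h4 : e / `|d| ^+ 2 * (t * `|d|) * `|d| = e * t by field; rewrite gt_eqF.
rewrite h4 in h3.
have h5 : 0 <= t * (t * (X + e)) by nra.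
by rewrite !pmulr_rge0 in h5.
Qed.

Lemma taylor y z : C y -> C z ->
  `|F z - F y - DF y (z - y)| <= L / 2 * `|z - y| ^+ 2.
Proof.
move=> Cy Cz; set d := z - y; set w := F z - F y - DF y d.
set nd := `|d|; set nw := `|w|.
have nd0 : 0 <= nd by apply: normr_ge0.
have nw0 : 0 <= nw by apply: normr_ge0.
set c := L * nd ^+ 2 * nw.
have c0 : 0 <= c by rewrite /c mulr_ge0 // mulr_ge0 // ?exprn_ge0 // ltW.
pose psi := fun t : R => ip (F (y + t *: d)) w - t * ip (DF y d) w - c / 2 * t ^+ 2.
have key : psi 1 <= psi 0.
  apply: incr_lemma => t t01 e he.
  have Ct := segC Cy Cz t01; rewrite -/d in Ct; set pt := y + t *: d in Ct.
  set K := nd * nw.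
  have K0 : 0 <= K by rewrite mulr_ge0.
  set eps := e / (2 * (K + 1)).
  have ep : 0 < eps by rewrite divr_gt0 // mulr_gt0 //; lra.
  have [del' dp' hdel'] := hfr Ct ep.
  have a0 : 0 < del' / (nd + 1) by rewrite divr_gt0 //; lra.
  have b0 : 0 < e / (c + 1) by rewrite divr_gt0 //; lra.
  have [del [dp hd1 hd2]] := exists_min a0 b0.
  exists del => // u u01 hu.
  have Cu := segC Cy Cz u01; rewrite -/d in Cu.
  set s := u - t.
  have hus : u = s + t by rewrite /s subrK.
  have hpu : (y + u *: d) - pt = s *: d by rewrite seg_sub2.
  have npu : `|(y + u *: d) - pt| = `|s| * nd by rewrite hpu normrZ.
  have hs1 : `|s| * (nd + 1) < del'.
    by rewrite -ltr_pdivlMr; [apply: lt_le_trans hd1 | lra].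
  have hlt : `|s| * nd < del' by have := normr_ge0 s; nra.
  have := hdel' _ Cu; rewrite npu => /(_ hlt); rewrite hpu DFZ //.
  set err := F (y + u *: d) - F pt - s *: DF pt d => herr.
  have Fd : F (y + u *: d) = F pt + s *: DF pt d + err.
    rewrite /err; set X := F (y + u *: d); set a := F pt; set b := s *: DF pt d.
    have -> : X - a - b = X - (a + b) by rewrite opprD addrA.
    by rewrite addrC subrK.
  rewrite /psi -/pt Fd (ipDl hip (F pt + s *: DF pt d) err) (ipDl hip (F pt)) (ipZl hip).
  set A := ip (DF pt d) w; set B := ip (DF y d) w; set E := ip err w.
  set P := ip (F pt) w.
  have F1 : A - B <= c * t.
    have := ip_CS hip (DF pt d - DF y d) w; rewrite (ipBl hip) -/A -/B.
    move=> h; apply: (le_trans h).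
    have := hlip Ct Cy d; rewrite seg_sub normrZ ger0_norm; last by case/andP: t01.
    move=> h2; have := ler_wpM2r nw0 h2.
    rewrite /c -/nw -/nd => h3; apply: (le_trans h3).
    by rewrite (_ : L * nd ^+ 2 * nw * t = L * (t * nd) * nd * nw) //; ring.
  have F2 : s * E <= `|s| * (`|err| * nw).
    have g1 := ip_CS hip err w; have g2 := ip_CS' hip err w.
    rewrite -/nw in g1 g2.
    have [s0|s0] := leP 0 s.
      by rewrite ger0_norm //; apply: ler_wpM2l.
    rewrite ltr0_norm // mulNr -mulrN; apply: ler_wnM2l => //; exact: ltW.
  have F3 : eps * K <= e / 2.
    have h : eps * (K + 1) = e / 2 by rewrite /eps; field; lra.
    nra.
  have F4 : c * `|s| <= e.
    have hs : `|s| * (c + 1) < e by rewrite -ltr_pdivlMr; [apply: lt_le_trans hd2 | lra].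
    have := normr_ge0 s; nra.
  have S2 : `|s| ^+ 2 = s ^+ 2 by rewrite real_normK // num_real.
  have ns0 := normr_ge0 s.
  have herr' := ler_wpM2r nw0 herr.
  have G2 : s * E <= s ^+ 2 * (e / 2).
    apply: (le_trans F2); rewrite -S2.
    have : `|s| * (`|err| * nw) <= `|s| * (eps * (`|s| * nd) * nw) by apply: ler_wpM2l.
    move=> h; apply: (le_trans h).
    have -> : `|s| * (eps * (`|s| * nd) * nw) = `|s| ^+ 2 * (eps * K) by rewrite /K; ring.
    by apply: ler_wpM2l => //; rewrite exprn_ge0.
  have G1 : s ^+ 2 * (A - B) <= s ^+ 2 * (c * t) by apply: ler_wpM2l => //; rewrite sqr_ge0.
  have G3 : - (c / 2 * s ^+ 2 * s) <= s ^+ 2 * (e / 2).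
    have : - s <= `|s| by rewrite -normrN ler_norm.
    move=> h; have h' : c * (- s) <= e by apply: le_trans F4; apply: ler_wpM2l.
    have := ler_wpM2l (sqr_ge0 s) h'; lra.
  have Eq : s * (P + s * A + E - u * B - c / 2 * u ^+ 2 -
    (P - t * B - c / 2 * t ^+ 2)) =
    s ^+ 2 * (A - B) + s * E - c / 2 * s ^+ 2 * s - s ^+ 2 * (c * t).
    by rewrite hus; field.
  rewrite Eq.
  lra.
move: key; rewrite /psi scale1r scale0r addr0 mul1r mul0r subr0 expr0n /= mulr0 subr0 expr1n mulr1.
have yd : y + d = z by rewrite /d addrC subrK.
rewrite yd.
move=> key.
have hw : ip w w <= c / 2.
  by rewrite /w !(ipBl hip); lra.
rewrite (ipxx hip) -/nw in hw.
have [nwz|nwp] := eqVneq nw 0.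
  by rewrite -/nw nwz mulr_ge0 ?exprn_ge0 // divr_ge0 // ltW.
have nwp' : 0 < nw by rewrite lt_def nwp nw0.
rewrite -/nw -/nd.
have : nw * nw <= nw * (L / 2 * nd ^+ 2) by rewrite /c in hw; nra.
by rewrite ler_pM2l.
Qed.

Lemma ip_ext (a b : H) : (forall v, ip a v = ip b v) -> a = b.
Proof.
move=> h; apply/eqP; rewrite -subr_eq0 -normr_eq0.
have := h (a - b); move/eqP; rewrite -subr_eq0 -(ipBl hip) (ipxx hip) sqrf_eq0.
by [].
Qed.

Lemma nc_pos y y' nu' : normal_cone ip C y' nu' -> C y -> 0 <= ip nu' (y' - y).
Proof.
move=> [_ h] Cy; have := h y Cy; rewrite !(ipBr hip); lra.
Qed.

Lemma newton_bound (lam sigma theta : R) (x y nu y' nu' : H) :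
  0 < lam -> 0 <= sigma -> sigma < 1 -> 0 < theta ->
  normal_cone ip C y nu -> normal_cone ip C y' nu' ->
  `|lam *: (Flin F DF y y' + nu') + y' - x| <= sigma * `|y' - y| ->
  lam * L / 2 * `|lam *: (F y + nu) + y - x| <= theta ->
  lam * L / 2 * `|lam *: (F y' + nu') + y' - x| <= theta_hat sigma theta.
Proof.
move=> lp s0 s1 t0 ncy ncy' hr hrho.
have Cy : C y by case: ncy.
have Cy' : C y' by case: ncy'.
set d := y' - y in hr *.
set r := lam *: (Flin F DF y y' + nu') + y' - x in hr.
set r0 := lam *: (F y + nu) + y - x in hrho.
set nd := `|d|.
have nd0 : 0 <= nd by apply: normr_ge0.
have hdiff : nd ^+ 2 <= ip r d - ip r0 d.
  have hmo := DF_mono Cy Cy'.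
  have h1 := nc_pos ncy' Cy.
  have h2 := nc_pos ncy Cy'.
  have hy : ip y' d - ip y d = nd ^+ 2 by rewrite -(ipBl hip) (ipxx hip).
  rewrite /r /r0 /Flin -/d !(ipBl hip) !(ipDl hip) !(ipZl hip) !(ipDl hip).
  have h2' : ip nu (y - y') = - ip nu d by rewrite /d !(ipBr hip); ring.
  have [_ h3] := ncy; have := h3 y' Cy'; rewrite -/d => h4.
  nra.
have hCS1 := ip_CS hip r d.
have hCS2 := ip_CS' hip r0 d.
have hq : (1 - sigma) * nd <= `|r0|.
  have [nz|np] := eqVneq nd 0; first by rewrite nz mulr0 normr_ge0.
  have ndp : 0 < nd by rewrite lt_def np nd0.
  rewrite -/nd in hCS1 hCS2 hr.
  have h5 := ler_wpM2r nd0 hr; rewrite -/nd in h5.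
  have : nd * ((1 - sigma) * nd) <= nd * `|r0| by nra.
  by rewrite ler_pM2l.
have hT : lam *: (F y' + nu') + y' - x = r + lam *: (F y' - F y - DF y d).
  apply: ip_ext => v.
  rewrite /r /Flin -/d !(ipDl hip, ipNl hip, ipZl hip).
  ring.
have htay := taylor Cy Cy'; rewrite -/d -/nd in htay.
have hT2 : `|lam *: (F y' + nu') + y' - x| <= sigma * nd + lam * (L / 2 * nd ^+ 2).
  rewrite hT; apply: (le_trans (ler_normD _ _)); rewrite normrZ gtr0_norm //.
  by apply: lerD => //; apply: ler_wpM2l => //; apply: ltW.
set q := lam * L / 2 * nd.
have q0 : 0 <= q by rewrite /q !mulr_ge0 // ?ltW //.
have m0 : 0 < 1 - sigma by lra.
have hqr : q <= theta / (1 - sigma).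
  rewrite ler_pdivlMr //.
  apply: le_trans hrho.
  have -> : q * (1 - sigma) = lam * L / 2 * ((1 - sigma) * nd) by rewrite /q; ring.
  by apply: ler_wpM2l => //; rewrite !mulr_ge0 // ltW.
have he : lam * L / 2 * `|lam *: (F y' + nu') + y' - x| <= sigma * q + q ^+ 2.
  have hc : 0 <= lam * L / 2 by rewrite !mulr_ge0 // ltW.
  apply: le_trans (ler_wpM2l hc hT2) _.
  by rewrite /q le_eqVlt; apply/orP; left; apply/eqP; field.
apply: (le_trans he).
have -> : theta_hat sigma theta = sigma * (theta / (1 - sigma)) + (theta / (1 - sigma)) ^+ 2.
  by rewrite /theta_hat; field; lra.
have tm0 : 0 <= theta / (1 - sigma) by rewrite divr_ge0 // ltW.
apply: lerD; first by apply: ler_wpM2l.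
by rewrite ler_sqr // nnegrE.
Qed.
End Main.

Lemma tau_facts (R : realType) (sigma theta eta L : R) :
  0 <= sigma -> sigma < 1 / 2 -> 0 < theta ->
  theta < (1 - sigma) * (1 - 2 * sigma) -> 0 < L ->
  2 * theta_hat sigma theta / L < eta ->
  let th := theta_hat sigma theta in let tau := tau_of sigma theta eta L in
  [/\ 0 <= th, th < theta, 0 <= tau, tau < 1 &
      th + tau * (eta * L / 2) = theta * (1 - tau) ^+ 2].
Proof.
move=> s0 s1 t0 tl L0 he th tau.
have m0 : 0 < 1 - sigma by lra.
have th0 : 0 <= th.
  rewrite /th /theta_hat; apply: mulr_ge0; first exact: ltW.
  by apply: addr_ge0; apply: divr_ge0 => //; rewrite ?exprn_ge0 // ltW.
have thlt : th < theta.
  have -> : th = theta * ((sigma * (1 - sigma) + theta) / (1 - sigma) ^+ 2).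
    by rewrite /th /theta_hat; field; lra.
  rewrite -[X in _ < X]mulr1 ltr_pM2l // ltr_pdivrMr ?exprn_gt0 // mul1r.
  nra.
have eta0 : 0 < eta.
  apply: le_lt_trans he; apply: divr_ge0; last exact: ltW.
  by apply: mulr_ge0.
set a := 2 * theta + eta * L / 2.
have a2 : 2 * theta < a by rewrite /a; have := mulr_gt0 eta0 L0; lra.
set c := theta - th.
have c0 : 0 < c by rewrite /c; lra.
have cth : c <= theta by rewrite /c; lra.
have disc0 : 0 <= a ^+ 2 - 4 * theta * c.
  have h1 : 4 * theta * c <= 4 * theta * theta by rewrite ler_pM2l //; lra.
  have h2 : (2 * theta) * (2 * theta) <= a * a by apply: ler_pM; lra.
  lra.
set D := Num.sqrt (a ^+ 2 - 4 * theta * c).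
have D0 : 0 <= D by apply: sqrtr_ge0.
have D2 : D ^+ 2 = a ^+ 2 - 4 * theta * c by rewrite sqr_sqrtr.
have tauE : tau = 2 * c / (a + D) by [].
have aD : 0 < a + D by lra.
have tauD : tau * (a + D) = 2 * c by rewrite tauE mulfVK // gt_eqF.
have tau0 : 0 <= tau by rewrite tauE divr_ge0 // ?ltW //; lra.
have tau1 : tau < 1 by rewrite tauE ltr_pdivrMr // mul1r; lra.
have h2t : 2 * theta * tau = a - D.
  have : (2 * theta * tau) * (a + D) = (a - D) * (a + D) by nra.
  by move/(mulIf (lt0r_neq0 aD)) => ->. 
split => //.
have : theta * tau ^+ 2 - a * tau + c = 0 by nra.
rewrite /a /c; nra.
Qed.

Theorem proposition4p7 (R : realType) (H : completeNormedModType R)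
  (ip : H -> H -> R) (C : set H) (F : H -> H) (DF : H -> H -> H)
  (L sigma theta eta : R) (x y nu : nat -> H) (lam : nat -> R) :
  is_inner_product ip ->
  C !=set0 -> closed C -> is_convex_set C ->
  monotone_on ip C F ->
  bounded_linear_on C DF -> frechet_deriv_on C F DF ->
  0 < L -> lipschitz_deriv_on C DF L ->
  (exists2 xs, C xs & exists2 v, normal_cone ip C xs v & F xs + v = 0) ->
  0 <= sigma -> sigma < 1 / 2 ->
  0 < theta -> theta < (1 - sigma) * (1 - 2 * sigma) ->
  2 * theta_hat sigma theta / L < eta ->
  algorithm2 ip C F DF L sigma theta eta x y nu lam ->
  forall k : nat, lam k.+1 * `|y k.+1 - x k| < eta ->
    normal_cone ip C (y k.+1) (nu k.+1) /\
    `|F (y k.+1) + nu k.+1| <= (2 * theta_hat sigma theta / L + eta) / lam k.+1 ^+ 2.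
Proof.
move=> hip Cne Ccl hconv hmon hbl hfr L0 hlip _ s0 s1 t0 tl he alg k hk.
have [] := tau_facts s0 s1 t0 tl L0 he.
set th := theta_hat sigma theta; set tau := tau_of sigma theta eta L.
move=> th0 thlt tau0 tau1 tauq.
move: alg; rewrite /algorithm2 -/th -/tau => -[Cx0 [y0e [nu0e [lam1 [lamF [_ step]]]]]].
have eta0 : 0 < eta.
  apply: le_lt_trans he; apply: divr_ge0; last exact: ltW.
  by apply: mulr_ge0.
have S : forall n, normal_cone ip C (y n) (nu n) -> 0 < lam n.+1 ->
    lam n.+1 * L / 2 * `|lam n.+1 *: (F (y n) + nu n) + y n - x n| <= theta ->
    normal_cone ip C (y n.+1) (nu n.+1) /\
    lam n.+1 * L / 2 * `|lam n.+1 *: (F (y n.+1) + nu n.+1) + y n.+1 - x n| <= th.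
  move=> n ncn ln rn; have [st1 _] := step n; move: st1.
  case: ifP => [test [-> ->] | _ [nc' hr]]; first by split.
  split => //.
  apply: (newton_bound hip hconv hmon hbl hfr L0 hlip ln s0 _ t0 ncn nc' hr rn).
  lra.
have P : forall n, [/\ normal_cone ip C (y n) (nu n), 0 < lam n.+1 &
    lam n.+1 * L / 2 * `|lam n.+1 *: (F (y n) + nu n) + y n - x n| <= theta].
  elim => [|n [ncn ln rn]].
    split => //.
      by rewrite y0e nu0e; split => // z _; rewrite (ip0l hip).
    rewrite y0e nu0e addr0 addrK normrZ gtr0_norm //.
    rewrite y0e in lamF.
    move: lamF; rewrite ler_pdivlMr // => lamF.
    have -> : lam 1%N * L / 2 * (lam 1%N * `|F (x 0%N)|) =
      lam 1%N ^+ 2 * `|F (x 0%N)| * L / 2 by ring.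
    lra.
  have [nc' e'] := S n ncn ln rn.
  have [_ st2] := step n; move: st2.
  set v := F (y n.+1) + nu n.+1.
  set lm := lam n.+1.
  case: ifP => [test [x1 l2] | /negbT test [x1 l2]].
    have l2p : 0 < lam n.+2 by rewrite l2 mulr_gt0 //; lra.
    split => //.
    have -> : lam n.+2 *: v + y n.+1 - x n.+1 = lm *: v + y n.+1 - x n.
      rewrite x1 l2; apply: (ip_ext hip) => w.
      rewrite !((ipDl hip), (ipNl hip), (ipZl hip)); ring.
    rewrite l2.
    have -> : (1 - tau) * lm * L / 2 * `|lm *: v + y n.+1 - x n| =
      (1 - tau) * (lm * L / 2 * `|lm *: v + y n.+1 - x n|) by ring.
    have : (1 - tau) * (lm * L / 2 * `|lm *: v + y n.+1 - x n|) <= (1 - tau) * th.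
      by apply: ler_wpM2l => //; lra.
    nra.
  rewrite -ltNge in test.
  set s := (1 - tau)^-1.
  have s1' : s * (1 - tau) = 1 by rewrite /s mulVf //; lra.
  have sp : 0 < s by rewrite /s invr_gt0; lra.
  have sge1 : 1 <= s by nra.
  have l2p : 0 < lam n.+2 by rewrite l2 divr_gt0 //; lra.
  split => //.
  set r := lm *: v + y n.+1 - x n.
  have hid : lam n.+2 *: v + y n.+1 - x n.+1 = s *: r + (1 - s) *: (y n.+1 - x n).
    rewrite x1 l2 /r; apply: (ip_ext hip) => w.
    rewrite !((ipDl hip), (ipNl hip), (ipZl hip)) /s; field; lra.
  rewrite hid.
  have hn : `|s *: r + (1 - s) *: (y n.+1 - x n)| <= s * `|r| + (s - 1) * `|y n.+1 - x n|.
    apply: (le_trans (ler_normD _ _)); rewrite !normrZ gtr0_norm // ler0_norm; last lra.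
    by rewrite opprB.
  have l2e : lam n.+2 = lm * s by rewrite l2.
  rewrite l2e.
  have hc : 0 <= lm * s * L / 2 by rewrite !mulr_ge0 // ltW.
  apply: (le_trans (ler_wpM2l hc hn)).
  set R1 := `|r| in e' *; set R2 := `|y n.+1 - x n| in test *.
  have R20 : 0 <= R2 by apply: normr_ge0.
  have -> : lm * s * L / 2 * (s * R1 + (s - 1) * R2) =
    s ^+ 2 * (lm * L / 2 * R1) + s * (s - 1) * (L / 2) * (lm * R2) by ring.
  have h1 : s ^+ 2 * (lm * L / 2 * R1) <= s ^+ 2 * th by apply: ler_wpM2l => //; apply: sqr_ge0.
  have h2 : s * (s - 1) * (L / 2) * (lm * R2) <= s * (s - 1) * (L / 2) * eta.
    apply: ler_wpM2l; last exact: ltW.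
    by apply: mulr_ge0; [apply: mulr_ge0; lra | lra].
  have h3 : s ^+ 2 * th + s * (s - 1) * (L / 2) * eta = theta.
    have st : s * tau = s - 1 by have := s1'; lra.
    have -> : s * (s - 1) * (L / 2) * eta = s ^+ 2 * (tau * (eta * L / 2)).
      by rewrite -st; field.
    rewrite -mulrDr tauq.
    have -> : s ^+ 2 * (theta * (1 - tau) ^+ 2) = theta * (s * (1 - tau)) ^+ 2 by ring.
    by rewrite s1' expr1n mulr1.
  lra.
have [ncn ln rn] := P k.
have [nc' e'] := S k ncn ln rn.
split => //.
set v := F (y k.+1) + nu k.+1.
set lm := lam k.+1 in ln e' hk *.
set N := `|lm *: v + y k.+1 - x k| in e' *.
set R2 := `|y k.+1 - x k| in hk *.
have hv : lm *: v = (lm *: v + y k.+1 - x k) - (y k.+1 - x k) by rewrite -[lm *: v + y k.+1 - x k]addrA addrK.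
have hlv : lm * `|v| <= N + R2.
  by rewrite -(gtr0_norm ln) -normrZ hv; apply: ler_normB.
have hN : lm * N * L <= 2 * th.
  have : lm * L / 2 * N * 2 <= th * 2 by rewrite ler_pM2r.
  have -> : lm * L / 2 * N * 2 = lm * N * L by field.
  lra.
rewrite ler_pdivlMr ?exprn_gt0 //.
have hlN : lm * N <= 2 * th / L by rewrite ler_pdivlMr.
have : lm * (lm * `|v|) <= lm * (N + R2) by rewrite ler_pM2l.
have -> : lm * (lm * `|v|) = `|v| * lm ^+ 2 by ring.
nra.
Qed.
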